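(* Let $n\ge1$ be an integer, $b_a>0$, $b_v>0$, $c>0$, and consider the system on $[0,1]^2$ $$\dot p=p(1-p)\Big(\frac{b_a}{n+1}-q(b_v-c)\Big),\qquad \dot q=q(1-q)\Big(\frac{b_v}{n+1}\sum_{k=0}^n p^k-c\Big),$$ with initial condition $p(0),q(0)\in(0,1)$. (i) If $b_a>(b_v-c)(n+1)$, then $p(t)\to 1$ (the population converges to all glycolytic). (ii) If $b_a<(b_v-c)(n+1)$ and $b_v>c(n+1)$, then $q(t)\to1$ and $p(t)\to0$ (the population converges to all VEGF (over)producers).
   Context: This system is the replicator dynamics of the double goods game in factored form: $p$ is the proportion of glycolytic cells and $q$ the proportion of VEGF (over)producers among the aerobic cells; $b_a$ is the benefit per unit of acidification, $b_v$ the benefit per unit of vascularization, $c$ the cost of (over)producing VEGF, and $n$ the number of interaction partners. *)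

(* Defs.v *)
From Stdlib Require Import Reals.
From Coquelicot Require Import Coquelicot.
Open Scope R_scope.

Definition p_rhs (n : nat) (ba bv c p q : R) : R :=
  p * (1 - p) * (ba / INR (n + 1) - q * (bv - c)).

(* sum_f_R0 f n = f 0 + ... + f n, i.e. sum_{k=0}^n p^k *)
Definition q_rhs (n : nat) (ba bv c p q : R) : R :=
  q * (1 - q) * (bv / INR (n + 1) * sum_f_R0 (fun k => p ^ k) n - c).

Definition is_solution (n : nat) (ba bv c : R) (p q : R -> R) : Prop :=
  filterlim p (at_right 0) (locally (p 0)) /\
  filterlim q (at_right 0) (locally (q 0)) /\
  (forall t, 0 < t -> is_derive p t (p_rhs n ba bv c (p t) (q t))) /\
  (forall t, 0 < t -> is_derive q t (q_rhs n ba bv c (p t) (q t))).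

(* Main.v *)
Require Import Defs.
From Stdlib Require Import Reals Lra Psatz.
From Coquelicot Require Import Coquelicot.
Open Scope R_scope.

Lemma start (x : R -> R) : filterlim x (at_right 0) (locally (x 0)) -> 0 < x 0 < 1 ->
  exists t0, 0 < t0 /\ 0 < x t0 < 1.
Proof.
  intros H Hx.
  assert (Hloc : locally (x 0) (fun y => 0 < y < 1)).
  { assert (He : 0 < Rmin (x 0) (1 - x 0)) by (apply Rmin_pos; lra).
    exists (mkposreal _ He). intros y Hy. cbn in Hy.
    unfold ball in Hy; cbn in Hy. unfold AbsRing_ball, abs, minus, plus, opp in Hy; cbn in Hy.
    apply Rabs_def2 in Hy. pose proof (Rmin_l (x 0) (1 - x 0)). pose proof (Rmin_r (x 0) (1 - x 0)). lra. }
  specialize (H _ Hloc). destruct H as [d Hd].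
  exists (d/2). pose proof (cond_pos d). split. lra.
  apply Hd. cbn. unfold ball; cbn. unfold AbsRing_ball, abs, minus, plus, opp; cbn.
  rewrite Ropp_0, Rplus_0_r, Rabs_right by lra. lra. lra.
Qed.

Lemma cont_of (x : R -> R) t v : is_derive x t v -> continuous x t.
Proof. intro H. apply (ex_derive_continuous (K:=R_AbsRing) (V:=R_NormedModule)). exists v; exact H. Qed.

Lemma cont_sum (x : R -> R) t n : continuous x t -> continuous (fun s => sum_f_R0 (fun k => x s ^ k) n) t.
Proof.
  intro Hx.
  assert (Hp : forall k, continuous (fun s => x s ^ k) t).
  { induction k. simpl. apply continuous_const.
    simpl. apply (continuous_mult (K:=R_AbsRing)); auto. }
  induction n. exact (Hp 0%nat).
  apply (continuous_plus (V:=R_NormedModule)); [exact IHn | exact (Hp (S n))].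
Qed.

Lemma sum_ge1 x n : 0 <= x -> 1 <= sum_f_R0 (fun k => x ^ k) n.
Proof.
  intro H. induction n. simpl. lra. simpl. pose proof (pow_le x (S n) H). simpl in H0. lra.
Qed.

Lemma deriv_1m (x : R -> R) t v : is_derive x t v -> is_derive (fun s => 1 - x s) t (- v).
Proof.
  intro H. pose proof (is_derive_minus (fun _ => 1) x t zero v (is_derive_const 1 t) H) as H2.
  replace (- v) with (minus (zero:R) v). exact H2. unfold minus, plus, opp, zero; simpl. ring.
Qed.
Lemma deriv_cont (x : R -> R) s l : is_derive x s l -> continuity_pt x s.
Proof.
  intro H. apply continuity_pt_filterlim.
  apply (ex_derive_continuous (K:=R_AbsRing) (V:=R_NormedModule)). exists l; exact H.
Qed.

Lemma deriv_lower (x dx : R -> R) t0 t m : 0 < t0 -> t0 <= t ->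
  (forall s, 0 < s -> is_derive x s (dx s)) ->
  (forall s, t0 <= s <= t -> m <= dx s) -> x t0 + m*(t-t0) <= x t.
Proof.
  intros H0 Ht Hd Hm.
  destruct (MVT_gen x t0 t dx) as [c [Hc Heq]].
  - intros y Hy. apply Hd. rewrite Rmin_left in Hy; lra.
  - intros y Hy. rewrite Rmin_left, Rmax_right in Hy by lra. eapply deriv_cont, Hd; lra.
  - rewrite Rmin_left, Rmax_right in Hc by lra.
    specialize (Hm c Hc). nra.
Qed.

Lemma lim_eps (x : R -> R) l :
  (forall eps, 0 < eps -> exists M, forall t, M < t -> Rabs (x t - l) < eps) ->
  is_lim x p_infty l.
Proof.
  intros H. apply is_lim_spec. intros eps. destruct (H eps (cond_pos eps)) as [M HM].
  exists M. exact HM.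
Qed.

Lemma pos_keep (x h : R -> R) t0 : 0 < t0 ->
  (forall t, 0 < t -> is_derive x t (x t * h t)) ->
  (forall t, 0 < t -> continuous h t) -> 0 < x t0 -> forall t, 0 < t -> 0 < x t.
Proof.
  intros Ht0 Hd Hc Hx t Ht.
  set (G := fun s => RInt h t0 s).
  assert (HG : forall s, 0 < s -> is_derive G s (h s)).
  { intros s Hs. apply (is_derive_RInt h G t0 s); [| apply Hc; lra].
    exists (mkposreal s Hs). intros y Hy.
    apply (RInt_correct (V:=R_CompleteNormedModule)). apply (ex_RInt_continuous (V:=R_CompleteNormedModule)). intros z Hz.
    apply Hc. cbn in Hy. unfold ball in Hy; cbn in Hy. unfold AbsRing_ball, abs, minus, plus, opp in Hy; cbn in Hy.
    apply Rabs_def2 in Hy. destruct (Rle_dec t0 y).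
    - rewrite Rmin_left in Hz by lra. lra.
    - rewrite Rmin_right in Hz by lra. lra. }
  set (F := fun s => x s * exp (- G s)).
  assert (HF : forall s, 0 < s -> is_derive F s 0).
  { intros s Hs. unfold F.
    evar (l : R).
    assert (Hl : is_derive (fun s => x s * exp (- G s)) s l).
    { apply (is_derive_mult x (fun s => exp (- G s))). apply Hd; lra.
      apply (is_derive_comp exp (fun s => - G s)). apply is_derive_exp.
      apply (is_derive_opp G). apply HG; lra. intros; apply Rmult_comm. }
    subst l. match type of Hl with is_derive _ _ ?v => replace 0 with v; [exact Hl|] end.
    unfold plus, mult, scal, opp; simpl. unfold mult; simpl. ring. }
  assert (HFe : F t = F t0).
  { destruct (Rle_dec t t0).
    - destruct (Req_dec t t0). subst; auto.
      apply eq_is_derive; [|lra]. intros s Hs. apply HF; lra.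
    - symmetry. apply eq_is_derive; [|lra]. intros s Hs. apply HF; lra. }
  unfold F, G in HFe. rewrite RInt_point in HFe. change (zero : R) with 0 in HFe.
  rewrite Ropp_0, exp_0, Rmult_1_r in HFe.
  pose proof (exp_pos (- RInt h t0 t)). nra.
Qed.

Lemma conv1 (x G : R -> R) m T : 0 < m -> 0 < T ->
  (forall t, 0 < t -> is_derive x t (x t * (1 - x t) * G t)) ->
  (forall t, 0 < t -> 0 < x t < 1) ->
  (forall t, T <= t -> m <= G t) -> is_lim x p_infty 1.
Proof.
  intros Hm HT Hd Hx HG.
  assert (Mono : forall s t, T <= s <= t -> x s <= x t).
  { intros s t Hst.
    pose proof (deriv_lower x (fun u => x u * (1 - x u) * G u) s t 0 ltac:(lra) ltac:(lra) Hd).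
    assert (x s + 0 * (t - s) <= x t). apply H. intros u Hu.
    specialize (Hx u ltac:(lra)). specialize (HG u ltac:(lra)).
    apply Rmult_le_pos; [apply Rmult_le_pos|]; lra. lra. }
  apply lim_eps. intros eps Heps.
  pose proof (Hx T HT) as HxT.
  set (r := x T * eps * m).
  assert (Hr : 0 < r) by (unfold r; apply Rmult_lt_0_compat; [apply Rmult_lt_0_compat|]; lra).
  exists (T + / r). intros t Ht.
  assert (HrT : 0 < / r) by (apply Rinv_0_lt_compat; lra).
  pose proof (Hx t ltac:(lra)) as Hxt.
  destruct (Rlt_dec (1 - eps) (x t)) as [Hlt|Hge].
  { rewrite Rabs_left1 by lra. lra. }
  exfalso.
  pose proof (deriv_lower x (fun u => x u * (1 - x u) * G u) T t r HT ltac:(lra) Hd) as H.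
  assert (x T + r * (t - T) <= x t).
  { apply H. intros u Hu. specialize (HG u ltac:(lra)).
    assert (x T <= x u) by (apply Mono; lra).
    assert (x u <= x t) by (apply Mono; lra).
    unfold r. apply Rmult_le_compat; try lra.
    apply Rmult_le_pos; lra. apply Rmult_le_compat; lra. }
  assert (r * (t - T) > 1).
  { replace 1 with (r * / r) by (field; lra). apply Rmult_lt_compat_l; lra. }
  lra.
Qed.

Theorem mainTheorem4 (n : nat) (ba bv c : R) (p q : R -> R) :
  (1 <= n)%nat -> 0 < ba -> 0 < bv -> 0 < c ->
  is_solution n ba bv c p q ->
  0 < p 0 < 1 -> 0 < q 0 < 1 ->
  (ba > (bv - c) * INR (n + 1) -> is_lim p p_infty 1) /\
  (ba < (bv - c) * INR (n + 1) -> bv > c * INR (n + 1) ->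
     is_lim q p_infty 1 /\ is_lim p p_infty 0).
Proof.
  intros Hn Hba Hbv Hc [Hp0 [Hq0 [Hdp Hdq]]] Hpi Hqi.
  assert (HN : 0 < INR (n + 1)) by (apply lt_0_INR; lia).
  set (N := INR (n + 1)) in *.
  set (a := ba / N). set (d := bv - c).
  assert (Ha : 0 < a) by (unfold a; apply Rdiv_lt_0_compat; lra).
  assert (Hcp : forall t, 0 < t -> continuous p t) by (intros t Ht; eapply cont_of, Hdp, Ht).
  assert (Hcq : forall t, 0 < t -> continuous q t) by (intros t Ht; eapply cont_of, Hdq, Ht).
  destruct (start p Hp0 Hpi) as [tp [Htp Hptp]].
  destruct (start q Hq0 Hqi) as [tq [Htq Hqtq]].
  assert (P1 : forall t, 0 < t -> 0 < p t).
  { apply (pos_keep p (fun t => (1 - p t) * (a - q t * d)) tp Htp); [| |lra].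
    - intros t Ht. replace (p t * ((1 - p t) * (a - q t * d))) with (p_rhs n ba bv c (p t) (q t))
        by (unfold p_rhs, a, d, N; ring). auto.
    - intros t Ht. apply (continuous_mult (K:=R_AbsRing)).
      apply (continuous_minus (V:=R_NormedModule)). apply continuous_const. auto.
      apply (continuous_minus (V:=R_NormedModule)). apply continuous_const.
      apply (continuous_mult (K:=R_AbsRing)). auto. apply continuous_const. }
  assert (P2 : forall t, 0 < t -> 0 < 1 - p t).
  { apply (pos_keep (fun t => 1 - p t) (fun t => - (p t * (a - q t * d))) tp Htp); [| |lra].
    - intros t Ht. replace ((1 - p t) * - (p t * (a - q t * d))) with (- p_rhs n ba bv c (p t) (q t))
        by (unfold p_rhs, a, d, N; ring). apply deriv_1m; auto.
    - intros t Ht. apply (continuous_opp (V:=R_NormedModule)). apply (continuous_mult (K:=R_AbsRing)). auto.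
      apply (continuous_minus (V:=R_NormedModule)). apply continuous_const.
      apply (continuous_mult (K:=R_AbsRing)). auto. apply continuous_const. }
  assert (Q1 : forall t, 0 < t -> 0 < q t).
  { apply (pos_keep q (fun t => (1 - q t) * (bv / N * sum_f_R0 (fun k => p t ^ k) n - c)) tq Htq); [| |lra].
    - intros t Ht. replace (q t * ((1 - q t) * (bv / N * sum_f_R0 (fun k => p t ^ k) n - c)))
        with (q_rhs n ba bv c (p t) (q t)) by (unfold q_rhs, N; ring). auto.
    - intros t Ht. apply (continuous_mult (K:=R_AbsRing)).
      apply (continuous_minus (V:=R_NormedModule)). apply continuous_const. auto.
      apply (continuous_minus (V:=R_NormedModule)); [|apply continuous_const].
      apply (continuous_mult (K:=R_AbsRing)). apply continuous_const. apply cont_sum; auto. }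
  assert (Q2 : forall t, 0 < t -> 0 < 1 - q t).
  { apply (pos_keep (fun t => 1 - q t) (fun t => - (q t * (bv / N * sum_f_R0 (fun k => p t ^ k) n - c))) tq Htq); [| |lra].
    - intros t Ht. replace ((1 - q t) * - (q t * (bv / N * sum_f_R0 (fun k => p t ^ k) n - c)))
        with (- q_rhs n ba bv c (p t) (q t)) by (unfold q_rhs, N; ring). apply deriv_1m; auto.
    - intros t Ht. apply (continuous_opp (V:=R_NormedModule)). apply (continuous_mult (K:=R_AbsRing)). auto.
      apply (continuous_minus (V:=R_NormedModule)); [|apply continuous_const].
      apply (continuous_mult (K:=R_AbsRing)). apply continuous_const. apply cont_sum; auto. }
  split.
  - intros Hi.
    assert (Had : d < a).
    { assert (a - d = (ba - d * N) / N) by (unfold a; field; lra).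
      assert (0 < (ba - d * N) / N) by (apply Rdiv_lt_0_compat; lra). lra. }
    assert (Hm : 0 < Rmin a (a - d)) by (apply Rmin_pos; lra).
    apply (conv1 p (fun t => a - q t * d) (Rmin a (a - d)) 1 Hm ltac:(lra)).
    + intros t Ht. replace (p t * (1 - p t) * (a - q t * d)) with (p_rhs n ba bv c (p t) (q t))
        by (unfold p_rhs, a, d, N; ring). auto.
    + intros t Ht. split; [apply P1 | pose proof (P2 t)]; lra.
    + intros t Ht. pose proof (Rmin_l a (a - d)). pose proof (Rmin_r a (a - d)).
      pose proof (Q1 t ltac:(lra)). pose proof (Q2 t ltac:(lra)).
      destruct (Rle_dec 0 d); nra.
  - intros Hii Hk.
    assert (Had : a < d).
    { assert (d - a = (d * N - ba) / N) by (unfold a; field; lra).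
      assert (0 < (d * N - ba) / N) by (apply Rdiv_lt_0_compat; lra). lra. }
    assert (Hkk : 0 < bv / N - c).
    { assert (bv / N - c = (bv - c * N) / N) by (field; lra).
      assert (0 < (bv - c * N) / N) by (apply Rdiv_lt_0_compat; lra). lra. }
    assert (Hql : is_lim q p_infty 1).
    { apply (conv1 q (fun t => bv / N * sum_f_R0 (fun k => p t ^ k) n - c) (bv / N - c) 1 Hkk ltac:(lra)).
      + intros t Ht. replace (q t * (1 - q t) * (bv / N * sum_f_R0 (fun k => p t ^ k) n - c))
          with (q_rhs n ba bv c (p t) (q t)) by (unfold q_rhs, N; ring). auto.
      + intros t Ht. split; [apply Q1 | pose proof (Q2 t)]; lra.
      + intros t Ht. pose proof (sum_ge1 (p t) n ltac:(pose proof (P1 t); lra)).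
        assert (0 < bv / N) by (apply Rdiv_lt_0_compat; lra). nra. }
    split; [exact Hql|].
    assert (Hd0 : 0 < d) by lra.
    assert (Heps : 0 < (d - a) / (2 * d)) by (apply Rdiv_lt_0_compat; lra).
    apply is_lim_spec in Hql. destruct (Hql (mkposreal _ Heps)) as [M HM]. cbn in HM.
    assert (H1p : is_lim (fun t => 1 - p t) p_infty 1).
    { apply (conv1 (fun t => 1 - p t) (fun t => q t * d - a) ((d - a) / 2) (Rmax 1 (M + 1))).
      - lra.
      - pose proof (Rmax_l 1 (M + 1)). lra.
      - intros t Ht. replace ((1 - p t) * (1 - (1 - p t)) * (q t * d - a)) with (- p_rhs n ba bv c (p t) (q t))
          by (unfold p_rhs, a, d, N; ring). apply deriv_1m; auto.
      - intros t Ht. pose proof (P1 t Ht). pose proof (P2 t Ht). lra.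
      - intros t Ht. pose proof (Rmax_r 1 (M + 1)). specialize (HM t ltac:(lra)).
        apply Rabs_def2 in HM. destruct HM as [HM1 HM2].
        assert (E : (d - a) / (2 * d) * d = (d - a) / 2) by (field; lra).
        assert (q t * d > (1 - (d - a) / (2 * d)) * d) by (apply Rmult_lt_compat_r; lra).
        nra. }
    apply is_lim_spec in H1p.
    apply lim_eps. intros eps He. destruct (H1p (mkposreal _ He)) as [M' HM'].
    exists M'. intros t Ht. specialize (HM' t Ht). cbn in HM'.
    replace (p t - 0) with (- (1 - p t - 1)) by ring. rewrite Rabs_Ropp. exact HM'.
Qed.
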